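(* Let $\beta>0$, $\alpha>2$, $N_o>0$, and $\eta(d)=\frac{1}{(1+d)^\alpha}$. (a) If $C,D>0$ satisfy $\dfrac{1+C}{C(2+D)}<\dfrac{1}{\tau\beta^{1/\alpha}}$, where $\tau=2\Big(\sum_{k=1}^\infty\frac{6}{k^{\alpha-1}}+\sum_{k=1}^\infty\frac{3}{k^\alpha}\Big)^{1/\alpha}$, then $(C,D)$ ensures SINR$_\beta$. (b) For any $C>0$ there exists $D>0$, depending on $\alpha,\beta,C$, such that $(C,D)$ ensures SINR$_\beta$. (c) There exists $D>0$, depending on $\alpha$ and $\beta$, such that $(C,D)$ ensures SINR$_\beta$ for all sufficiently large $C$.
   Context: $\mathrm{SINR}(t,r,T,P,N_o,\eta)=\dfrac{P\eta(\|t-r\|)}{N_o+\sum_{t'\in T}P\eta(\|t'-r\|)}$ for $t,r\in\mathbb{R}^2$, $T$ a finite subset of $\mathbb{R}^2$, $P>0$. $(t,r,T)$ satisfies DC$(C,D)$ if $\|t-r\|\le C$ and $\|t'-t''\|\ge C(2+D)$ for all distinct $t',t''\in T\cup\{t\}$. The pair $(C,D)$ ensures SINR$_\beta$ (given $N_o$ and $\eta$) if there exists $P>0$ such that every triple $(t,r,T)$ satisfying DC$(C,D)$ has $\mathrm{SINR}(t,r,T,P,N_o,\eta)\ge\beta$. *)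

(* Defs.v *)
From Stdlib Require Import Reals Lra List.
From Coquelicot Require Import Coquelicot.
Open Scope R_scope.

Definition pt := (R * R)%type.
Definition dist2 (p q : pt) : R :=
  sqrt ((fst p - fst q) ^ 2 + (snd p - snd q) ^ 2).

(* Finite sets of transmitters are represented by duplicate-free lists. *)
Definition interference (T : list pt) (r : pt) (P : R) (eta : R -> R) : R :=
  fold_right (fun t' acc => P * eta (dist2 t' r) + acc) 0 T.

Definition SINR (t r : pt) (T : list pt) (P No : R) (eta : R -> R) : R :=
  P * eta (dist2 t r) / (No + interference T r P eta).

Definition DC (C D : R) (t r : pt) (T : list pt) : Prop :=
  dist2 t r <= C /\
  forall u v, In u (t :: T) -> In v (t :: T) -> u <> v -> dist2 u v >= C * (2 + D).

(* (C,D) ensures SINR_beta (given No and eta); triples range over finite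
   sets T of other transmitters (t not in T). *)
Definition ensures_SINR (C D beta No : R) (eta : R -> R) : Prop :=
  exists P, P > 0 /\
    forall (t r : pt) (T : list pt), NoDup (t :: T) -> DC C D t r T ->
      SINR t r T P No eta >= beta.

Definition eta_alpha (alpha : R) (d : R) : R := / Rpower (1 + d) alpha.

Definition tau (alpha : R) : R :=
  2 * Rpower (Series (fun n : nat => 6 / Rpower (INR (S n)) (alpha - 1))
              + Series (fun n : nat => 3 / Rpower (INR (S n)) alpha)) (1 / alpha).

(* Main.v *)
Require Import Defs.
From Stdlib Require Import Reals List.
From Coquelicot Require Import Coquelicot.
From Stdlib Require Import Lra Lia Psatz ZArith Classical.
Open Scope R_scope.


Definition sumR (l : list R) : R := fold_right Rplus 0 l.
Definition cnt (m : nat) (ks : list nat) : nat := length (filter (fun k => Nat.ltb k m) ks).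

Fixpoint Hs (g : nat -> R) (K : nat) : R :=
  match K with 0 => 0 | S K' => Hs g K' + (6 * INR (S K') + 3) * g (S K') end.

Lemma sumR_filter (g : nat -> R) (p : nat -> bool) (l : list nat) :
  sumR (map g l) = sumR (map g (filter p l)) + sumR (map g (filter (fun k => negb (p k)) l)).
Proof. induction l as [|a l IH]; simpl. lra. destruct (p a); simpl; rewrite IH; lra. Qed.

Lemma len_filter (p : nat -> bool) (l : list nat) :
  length l = (length (filter p l) + length (filter (fun k => negb (p k)) l))%nat.
Proof. induction l as [|a l IH]; simpl. lia. destruct (p a); simpl; lia. Qed.

Lemma sumR_const (g : nat -> R) (c : nat) (l : list nat) :
  (forall k, In k l -> k = c) -> sumR (map g l) = INR (length l) * g c.
Proof.
  induction l as [|a l IH]; intros H. simpl; lra.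
  change (sumR (map g (a :: l))) with (g a + sumR (map g l)).
  change (length (a :: l)) with (S (length l)).
  rewrite (H a (or_introl eq_refl)), IH by (intros; apply H; right; auto).
  rewrite S_INR. lra.
Qed.

Lemma filter_filter_le (p q : nat -> bool) (l : list nat) :
  (length (filter q (filter p l)) <= length (filter q l))%nat.
Proof. induction l as [|a l IH]; simpl. lia. destruct (p a); simpl; destruct (q a); simpl; lia. Qed.

Lemma filter_all_len (q : nat -> bool) (l : list nat) :
  (forall k, In k l -> q k = true) -> length (filter q l) = length l.
Proof. induction l as [|a l IH]; intros H; simpl. lia.
  rewrite (H a (or_introl eq_refl)); simpl. rewrite IH; auto. intros; apply H; right; auto. Qed.

Lemma cnt_len (m : nat) (l : list nat) :
  (forall k, In k l -> (k < m)%nat) -> cnt m l = length l.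
Proof. intros H. apply filter_all_len. intros k Hk. apply Nat.ltb_lt. auto. Qed.

Lemma abel_claim (g : nat -> R) (Hg0 : forall k, 0 <= g k) (Hgd : forall k, g (S k) <= g k) :
  forall K ks, (forall k, In k ks -> (k <= K)%nat) ->
  (forall m, (cnt m ks <= 3*m*m - 3)%nat) ->
  sumR (map g ks) + (3 * (INR K + 1)^2 - 3 - INR (length ks)) * g K <= Hs g K.
Proof.
  induction K as [|K IH]; intros ks Hle Hc.
  - assert (E : length ks = 0%nat).
    { specialize (Hc 1%nat). rewrite cnt_len in Hc. simpl in Hc; lia.
      intros k Hk; specialize (Hle k Hk); lia. }
    destruct ks; [|simpl in E; lia]. simpl. lra.
  - set (p := fun k => Nat.leb k K).
    rewrite (sumR_filter g p ks).
    rewrite (len_filter p ks).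
    set (kin := filter p ks). set (kout := filter (fun k => negb (p k)) ks).
    assert (Hin : forall k, In k kin -> (k <= K)%nat).
    { intros k Hk. unfold kin in Hk. apply filter_In in Hk. destruct Hk as [_ Hk].
      unfold p in Hk. apply Nat.leb_le; auto. }
    assert (Hout : forall k, In k kout -> k = S K).
    { intros k Hk. unfold kout in Hk. apply filter_In in Hk. destruct Hk as [Hk1 Hk].
      unfold p in Hk. specialize (Hle k Hk1). destruct (Nat.leb k K) eqn:E; simpl in Hk.
      discriminate. apply Nat.leb_gt in E. lia. }
    assert (Hcin : forall m, (cnt m kin <= 3*m*m - 3)%nat).
    { intros m. eapply Nat.le_trans; [apply filter_filter_le|]. apply Hc. }
    specialize (IH kin Hin Hcin).
    rewrite (sumR_const g (S K) kout Hout).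
    assert (HL : (length kin <= 3 * S K * S K - 3)%nat).
    { rewrite <- (cnt_len (S K) kin). apply Hcin. intros k Hk; specialize (Hin k Hk); lia. }
    apply le_INR in HL. rewrite minus_INR in HL by lia.
    rewrite !mult_INR in HL. change (Hs g (S K)) with (Hs g K + (6 * INR (S K) + 3) * g (S K)).
    rewrite plus_INR. rewrite !S_INR in *. simpl INR in HL.
    assert (HK := pos_INR K).
    specialize (Hgd K). specialize (Hg0 (S K)).
    set (a := INR (length kin)) in *. set (b := INR (length kout)).
    set (x := INR K) in *.
    assert (0 <= (3 * (x+1)^2 - 3 - a) * (g K - g (S K))).
    { apply Rmult_le_pos; nra. }
    nra.
Qed.

Lemma abel (g : nat -> R) (Hg0 : forall k, 0 <= g k) (Hgd : forall k, g (S k) <= g k) :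
  forall K ks, (forall k, In k ks -> (k <= K)%nat) ->
  (forall m, (cnt m ks <= 3*m*m - 3)%nat) ->
  sumR (map g ks) <= Hs g K.
Proof.
  intros K ks Hle Hc.
  assert (H := abel_claim g Hg0 Hgd K ks Hle Hc).
  assert (HL : (length ks <= 3 * S K * S K - 3)%nat).
  { rewrite <- (cnt_len (S K) ks). apply Hc. intros k Hk; specialize (Hle k Hk); lia. }
  apply le_INR in HL. rewrite minus_INR in HL by lia.
  rewrite !mult_INR in HL. rewrite (S_INR K) in HL. simpl INR in HL.
  assert (0 <= (3 * (INR K + 1)^2 - 3 - INR (length ks)) * g K).
  { apply Rmult_le_pos; [|apply Hg0]. nra. }
  lra.
Qed.

Lemma ln_le_sub1 (z : R) : 0 < z -> ln z <= z - 1.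
Proof. intros Hz. assert (H := exp_ineq1_le (ln z)). rewrite exp_ln in H; lra. Qed.

Lemma key_tel (q x : R) : 0 < q -> 2 <= x ->
  q * / Rpower x (q + 1) <= Rpower (x - 1) (- q) - Rpower x (- q).
Proof.
  intros Hq Hx. unfold Rpower.
  assert (Hx0 : 0 < x) by lra. assert (Hy0 : 0 < x - 1) by lra.
  assert (E1 : / exp ((q + 1) * ln x) = exp (- q * ln x) / x).
  { rewrite <- (exp_ln x) at 3 by lra. rewrite <- exp_Ropp.
    unfold Rdiv. rewrite <- exp_Ropp, <- exp_plus. f_equal. ring. }
  rewrite E1.
  assert (E2 : exp (- q * ln (x - 1)) = exp (- q * ln x) * exp (q * (ln x - ln (x-1)))).
  { rewrite <- exp_plus. f_equal. ring. }
  rewrite E2.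
  assert (Hl : 1 / x <= ln x - ln (x - 1)).
  { rewrite <- ln_div by lra. 
    assert (H := ln_le_sub1 ((x-1)/x)). 
    rewrite ln_div in H by lra. rewrite ln_div by lra.
    assert ((x - 1) / x - 1 = - (1 / x)) by (field; lra).
    assert (0 < (x-1)/x) by (apply Rdiv_lt_0_compat; lra). lra. }
  assert (H3 := exp_ineq1_le (q * (ln x - ln (x - 1)))).
  assert (H4 : 0 < exp (- q * ln x)) by apply exp_pos.
  assert (H5 : q / x <= q * (ln x - ln (x - 1))).
  { unfold Rdiv. replace (q * / x) with (q * (1 / x)) by (field; lra).
    apply Rmult_le_compat_l; lra. }
  assert (H6 : exp (- q * ln x) * (1 + q / x) <= exp (- q * ln x) * exp (q * (ln x - ln (x - 1)))).
  { apply Rmult_le_compat_l; lra. }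
  assert (E3 : q * (exp (- q * ln x) / x) = exp (- q * ln x) * (1 + q / x) - exp (- q * ln x)) by (field; lra).
  rewrite E3. lra.
Qed.

Definition pterm (p : R) (n : nat) : R := / Rpower (INR (S n)) p.

Lemma pterm_pos p n : 0 < pterm p n.
Proof. unfold pterm, Rpower. apply Rinv_0_lt_compat, exp_pos. Qed.

Lemma Rpower_1_base y : Rpower 1 y = 1.
Proof. unfold Rpower. rewrite ln_1, Rmult_0_r. apply exp_0. Qed.

Lemma psum_bound (p : R) : 1 < p -> forall N,
  sum_n (pterm p) N <= 1 + / (p - 1) * (1 - Rpower (INR (S N)) (- (p - 1))).
Proof.
  intros Hp N. induction N as [|N IH].
  - rewrite sum_O. unfold pterm. simpl INR. rewrite !Rpower_1_base. lra.
  - rewrite sum_Sn. change plus with Rplus. unfold pterm at 2.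
    assert (Hx : 2 <= INR (S (S N))).
    { rewrite !S_INR. assert (H := pos_INR N). lra. }
    assert (H := key_tel (p - 1) (INR (S (S N))) ltac:(lra) Hx).
    replace (p - 1 + 1) with p in H by ring.
    replace (INR (S (S N)) - 1) with (INR (S N)) in H by (rewrite (S_INR (S N)); ring).
    assert (Hq : 0 < / (p - 1)) by (apply Rinv_0_lt_compat; lra).
    assert (H2 : / Rpower (INR (S (S N))) p <= / (p-1) * (Rpower (INR (S N)) (- (p - 1)) - Rpower (INR (S (S N))) (- (p - 1)))).
    { replace (/ Rpower (INR (S (S N))) p) with (/ (p-1) * ((p - 1) * / Rpower (INR (S (S N))) p)) by (field; split; [unfold Rpower; apply Rgt_not_eq, exp_pos | lra]).
      apply Rmult_le_compat_l; lra. }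
    lra.
Qed.

Lemma psum_bound' (p : R) : 1 < p -> forall N, sum_n (pterm p) N <= 1 + / (p - 1).
Proof.
  intros Hp N. assert (H := psum_bound p Hp N).
  assert (0 < Rpower (INR (S N)) (- (p - 1))) by (unfold Rpower; apply exp_pos).
  assert (Hq : 0 < / (p - 1)) by (apply Rinv_0_lt_compat; lra).
  nra.
Qed.

Lemma ex_series_pos_bounded (a : nat -> R) (M : R) :
  (forall n, 0 <= a n) -> (forall N, sum_n a N <= M) -> ex_series a.
Proof.
  intros H0 HM.
  assert (Hf : ex_finite_lim_seq (sum_n a)).
  { apply ex_finite_lim_seq_incr with M; auto.
    intros n. rewrite sum_Sn. change plus with Rplus. specialize (H0 (S n)). lra. }
  destruct Hf as [l Hl]. exists l. exact Hl.
Qed.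

Lemma ex_series_pterm (p : R) : 1 < p -> ex_series (pterm p).
Proof.
  intros Hp. apply ex_series_pos_bounded with (1 + / (p - 1)).
  intros n; left; apply pterm_pos. apply psum_bound'; auto.
Qed.

Lemma sum_le_Series (a : nat -> R) : (forall n, 0 <= a n) -> ex_series a ->
  forall N, sum_n a N <= Series a.
Proof.
  intros H0 Hex N. apply is_lim_seq_incr_compare.
  apply Series_correct in Hex. exact Hex.
  intros n. rewrite sum_Sn. change plus with Rplus. specialize (H0 (S n)). lra.
Qed.

Definition W (i : Z) : Z := if Z.eqb i 0 then 0%Z else ((2 * Z.abs i - 1)^2)%Z.
Definition zr (M : Z) : list Z := map (fun k => (Z.of_nat k - M)%Z) (seq 0 (Z.to_nat (2*M+1))).
Definition box (M : Z) : list (Z*Z) := list_prod (zr M) (zr M).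
Definition Lf (m : nat) : list (Z*Z) :=
  filter (fun c => Z.ltb (W (fst c) + W (snd c)) (2 * Z.of_nat m * Z.of_nat m)) (box (Z.of_nat m)).

Lemma in_zr (M i : Z) : (-M <= i <= M)%Z -> In i (zr M).
Proof.
  intros H. unfold zr. apply in_map_iff. exists (Z.to_nat (i + M)). split.
  - rewrite Z2Nat.id by lia. lia.
  - apply in_seq. lia.
Qed.

Lemma len_zr M : (0 <= M)%Z -> length (zr M) = Z.to_nat (2*M+1).
Proof. intros. unfold zr. rewrite length_map, length_seq. auto. Qed.

Lemma W_nonneg i : (0 <= W i)%Z.
Proof. unfold W. destruct (Z.eqb i 0); lia. Qed.

Lemma W_bound (i M : Z) : (0 <= M)%Z -> (W i < 2 * M * M)%Z -> (- M <= i <= M)%Z.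
Proof.
  intros HM H. unfold W in H. destruct (Z.eqb_spec i 0); [lia|].
  assert (Ha : (Z.abs i <= M)%Z).
  { destruct (Z.le_gt_cases (Z.abs i) M) as [Ha|Ha]; auto.
    exfalso. assert (Hb : (2 * M + 1 <= 2 * Z.abs i - 1)%Z) by lia.
    assert (Hc : ((2 * M + 1)^2 <= (2 * Z.abs i - 1)^2)%Z) by (apply Z.pow_le_mono_l; lia).
    nia. }
  lia.
Qed.

Lemma W_bound2 (i x K : Z) : (12 <= x)%Z -> (3 * x < 4 * K + 4)%Z ->
  (W i < 2 * x * x)%Z -> (- K <= i <= K)%Z.
Proof.
  intros Hx HK H. unfold W in H. destruct (Z.eqb_spec i 0); [lia|].
  assert (Ha : (Z.abs i <= K)%Z).
  { destruct (Z.le_gt_cases (Z.abs i) K) as [Ha|Ha]; auto.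
    exfalso. assert (Hb : (3 * x - 1 <= 2 * (2 * Z.abs i - 1))%Z) by lia.
    assert (Hc : ((3 * x - 1)^2 <= (2 * (2 * Z.abs i - 1))^2)%Z) by (apply Z.pow_le_mono_l; lia).
    nia. }
  lia.
Qed.

Lemma Lf_len_small : forall m, (2 <= m <= 11)%nat -> (length (Lf m) <= 3*m*m-3)%nat.
Proof.
  assert (Hc : forallb (fun m => Nat.leb (length (Lf m)) (3*m*m-3)) (seq 2 10) = true)
    by (vm_compute; reflexivity).
  intros m Hm. rewrite forallb_forall in Hc.
  apply Nat.leb_le. apply Hc. apply in_seq. lia.
Qed.

Lemma cells_exist (m : nat) : (2 <= m)%nat -> exists L : list (Z*Z),
  (length L <= 3*m*m-3)%nat /\
  forall i j, (W i + W j < 2 * Z.of_nat m * Z.of_nat m)%Z -> In (i,j) L.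
Proof.
  intros Hm.
  destruct (Nat.le_gt_cases m 11) as [Hs|Hb].
  - exists (Lf m). split. apply Lf_len_small; lia.
    intros i j Hij. unfold Lf. apply filter_In. split.
    + unfold box. apply in_prod; apply in_zr.
      * assert (H1 := W_nonneg j). apply W_bound; lia.
      * assert (H1 := W_nonneg i). apply W_bound; lia.
    + simpl. apply Z.ltb_lt. auto.
  - set (K := (3 * Z.of_nat m / 4)%Z).
    assert (HK1 : (4 * K <= 3 * Z.of_nat m)%Z) by (unfold K; apply Z.mul_div_le; lia).
    assert (HK2 : (3 * Z.of_nat m < 4 * K + 4)%Z).
    { unfold K. assert (H := Z.mod_pos_bound (3 * Z.of_nat m) 4 ltac:(lia)).
      assert (H' := Z.div_mod (3 * Z.of_nat m) 4 ltac:(lia)). lia. }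
    assert (HK0 : (0 <= K)%Z) by lia.
    exists (box K). split.
    + unfold box. rewrite length_prod, len_zr by lia.
      assert (E : (Z.of_nat (Z.to_nat (2*K+1) * Z.to_nat (2*K+1)) <= Z.of_nat (3*m*m-3))%Z).
      { rewrite Nat2Z.inj_mul, Z2Nat.id by lia. rewrite Nat2Z.inj_sub by nia.
        rewrite !Nat2Z.inj_mul. simpl Z.of_nat.
        assert (Hm' : (12 <= Z.of_nat m)%Z) by lia.
        set (x := Z.of_nat m) in *.
        assert (H1 : ((4*K+2)*(4*K+2) <= (3*x+2)*(3*x+2))%Z) by (apply Z.mul_le_mono_nonneg; lia).
        nia. }
      lia.
    + intros i j Hij. unfold box. apply in_prod; apply in_zr.
      * assert (H1 := W_nonneg j). apply (W_bound2 i (Z.of_nat m)); lia.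
      * assert (H1 := W_nonneg i). apply (W_bound2 j (Z.of_nat m)); lia.
Qed.


Definition fl (x : R) : Z := (up x - 1)%Z.
Lemma fl_spec x : IZR (fl x) <= x < IZR (fl x) + 1.
Proof. unfold fl. destruct (archimed x) as [H1 H2]. rewrite minus_IZR. lra. Qed.

Lemma W_le (u : R) : IZR (W (fl (u + /2))) <= 4 * u^2.
Proof.
  destruct (fl_spec (u + /2)) as [H1 H2]. set (i := fl (u + /2)) in *.
  unfold W. destruct (Z.eqb_spec i 0) as [E|E]. simpl. nra.
  rewrite Z.pow_2_r, mult_IZR, minus_IZR, mult_IZR.
  destruct (Z.le_gt_cases 0 i) as [Hi|Hi].
  - rewrite Z.abs_eq by lia. assert (Hi1 : (1 <= i)%Z) by lia. apply IZR_le in Hi1.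
    assert (0 <= 2 * IZR i - 1 <= 2 * u) by lra. simpl IZR. nra.
  - rewrite Z.abs_neq by lia. rewrite opp_IZR. assert (Hi1 : (i <= -1)%Z) by lia. apply IZR_le in Hi1.
    assert (0 <= 2 * - IZR i - 1 <= - 2 * u) by lra. simpl IZR. nra.
Qed.

Lemma sq_small a h : -1 < a < 1 -> 0 < h -> (a*h)^2 < h^2.
Proof. intros. assert (a*a < 1) by nra. assert (0 < h*h) by nra.
  replace ((a*h)^2) with ((a*a)*(h*h)) by ring. replace (h^2) with (1*(h*h)) by ring.
  apply Rmult_lt_compat_r; lra. Qed.

Definition cell (r : pt) (h : R) (p : pt) : Z * Z :=
  (fl ((fst p - fst r) / h + /2), fl ((snd p - snd r) / h + /2)).

Lemma fl_eq_close a b : fl a = fl b -> Rabs (a - b) < 1.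
Proof. intros E. destruct (fl_spec a), (fl_spec b). rewrite E in *. apply Rabs_def1; lra. Qed.

Lemma dist2_sq p q : (dist2 p q)^2 = (fst p - fst q) ^ 2 + (snd p - snd q) ^ 2.
Proof. unfold dist2. apply pow2_sqrt. apply Rplus_le_le_0_compat; apply pow2_ge_0. Qed.

Lemma dist2_nonneg p q : 0 <= dist2 p q.
Proof. apply sqrt_pos. Qed.

Lemma cell_close r h s p q : 0 < h -> 0 < s -> 2 * h * h = s * s -> cell r h p = cell r h q -> dist2 p q < s.
Proof.
  intros Hh Hs Hhs E. unfold cell in E. injection E as E1 E2.
  apply fl_eq_close in E1. apply fl_eq_close in E2.
  replace ((fst p - fst r) / h + / 2 - ((fst q - fst r) / h + / 2)) with ((fst p - fst q) / h) in E1 by (field; lra).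
  replace ((snd p - snd r) / h + / 2 - ((snd q - snd r) / h + / 2)) with ((snd p - snd q) / h) in E2 by (field; lra).
  apply Rabs_def2 in E1. apply Rabs_def2 in E2.
  assert (X1 : fst p - fst q = ((fst p - fst q)/h) * h) by (field; lra).
  assert (X2 : snd p - snd q = ((snd p - snd q)/h) * h) by (field; lra).
  set (a := (fst p - fst q)/h) in *. set (b := (snd p - snd q)/h) in *.
  assert (Q1 : (fst p - fst q)^2 < h^2) by (rewrite X1; apply sq_small; lra).
  assert (Q2 : (snd p - snd q)^2 < h^2) by (rewrite X2; apply sq_small; lra).
  assert (Hd := dist2_sq p q). assert (Hd0 := dist2_nonneg p q).
  destruct (Rlt_or_le (dist2 p q) s) as [H|H]; auto.
  exfalso. nra.
Qed.

Lemma NoDup_map_inj {A B} (f : A -> B) (l : list A) :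
  NoDup l -> (forall x y, In x l -> In y l -> f x = f y -> x = y) -> NoDup (map f l).
Proof.
  induction l as [|a l IH]; intros Hn Hi; simpl. constructor.
  inversion Hn; subst. constructor.
  - intros Hin. apply in_map_iff in Hin. destruct Hin as [y [Hy1 Hy2]].
    assert (y = a) by (apply Hi; simpl; auto). subst. auto.
  - apply IH; auto. intros; apply Hi; simpl; auto.
Qed.

Lemma cnt_map {A} (kf : A -> nat) m (l : list A) :
  cnt m (map kf l) = length (filter (fun p => Nat.ltb (kf p) m) l).
Proof. unfold cnt. induction l as [|a l IH]; simpl; auto. destruct (Nat.ltb (kf a) m); simpl; auto. Qed.

Lemma cell_W r h p m : 0 < h -> 0 <= INR m ->
  dist2 p r * dist2 p r * 2 < INR m * INR m * (h * h) ->
  (W (fst (cell r h p)) + W (snd (cell r h p)) < 2 * Z.of_nat m * Z.of_nat m)%Z.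
Proof.
  intros Hh Hm Hd. unfold cell; cbn [fst snd].
  assert (H1 := W_le ((fst p - fst r) / h)). assert (H2 := W_le ((snd p - snd r) / h)).
  apply lt_IZR. rewrite plus_IZR, !mult_IZR, <- !INR_IZR_INZ.
  assert (Hs := dist2_sq p r).
  assert (E : 4 * ((fst p - fst r) / h)^2 + 4 * ((snd p - snd r) / h)^2 = 4 * (dist2 p r)^2 / (h*h)).
  { rewrite Hs. field. lra. }
  assert (Hlt : 4 * (dist2 p r)^2 / (h*h) < 2 * INR m * INR m).
  { apply Rmult_lt_reg_r with (h*h). nra. unfold Rdiv. rewrite Rmult_assoc, Rinv_l by nra. nra. }
  lra.
Qed.

Lemma count_geo (r : pt) (s h : R) (T : list pt) (kf : pt -> nat) :
  0 < s -> 0 < h -> 2 * h * h = s * s -> NoDup T ->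
  (forall u v, In u T -> In v T -> u <> v -> dist2 u v >= s) ->
  (forall p, In p T -> (1 <= kf p)%nat) ->
  (forall p m, In p T -> (kf p < m)%nat -> dist2 p r < INR m * s / 2) ->
  forall m, (cnt m (map kf T) <= 3*m*m - 3)%nat.
Proof.
  intros Hs Hh Hhs Hnd Hsep Hk1 Hkm m. rewrite cnt_map.
  remember (filter (fun p => Nat.ltb (kf p) m) T) as Tm eqn:ETm.
  assert (HTm : forall p, In p Tm -> In p T /\ (kf p < m)%nat).
  { intros p Hp. rewrite ETm in Hp. apply filter_In in Hp. destruct Hp. split; auto. apply Nat.ltb_lt; auto. }
  destruct (Nat.le_gt_cases m 1) as [Hm|Hm].
  - destruct Tm as [|p l]. simpl; lia.
    exfalso. destruct (HTm p) as [H1 H2]. simpl; auto. specialize (Hk1 p H1). lia.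
  - destruct (cells_exist m ltac:(lia)) as [L [HL HinL]].
    eapply Nat.le_trans; [|exact HL].
    rewrite <- (length_map (cell r h)).
    apply NoDup_incl_length.
    + apply NoDup_map_inj. rewrite ETm. apply NoDup_filter; auto.
      intros x y Hx Hy Exy. destruct (classic (x = y)) as [|Hne]; auto.
      exfalso. apply HTm in Hx. apply HTm in Hy.
      specialize (Hsep x y (proj1 Hx) (proj1 Hy) Hne).
      assert (Hc := cell_close r h s x y Hh Hs Hhs Exy). lra.
    + intros c Hc. apply in_map_iff in Hc. destruct Hc as [p [Hpc Hp]]. subst c.
      apply HTm in Hp. destruct Hp as [Hp1 Hp2].
      specialize (Hkm p m Hp1 Hp2).
      rewrite (surjective_pairing (cell r h p)). apply HinL.
      apply cell_W; auto. apply pos_INR.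
      assert (Hd0 := dist2_nonneg p r).
      assert (Hm0 := pos_INR m).
      assert (dist2 p r * dist2 p r < (INR m * s / 2) * (INR m * s / 2)) by nra.
      nra.
Qed.

Lemma dist2_sym p q : dist2 p q = dist2 q p.
Proof. unfold dist2. f_equal. ring. Qed.

Lemma dist2_tri p r t : dist2 p t <= dist2 p r + dist2 r t.
Proof.
  assert (H1 := dist2_sq p t). assert (H2 := dist2_sq p r). assert (H3 := dist2_sq r t).
  assert (N1 := dist2_nonneg p t). assert (N2 := dist2_nonneg p r). assert (N3 := dist2_nonneg r t).
  set (x1 := fst p - fst r) in *. set (y1 := snd p - snd r) in *.
  set (x2 := fst r - fst t) in *. set (y2 := snd r - snd t) in *.
  assert (E : (fst p - fst t) = x1 + x2) by (unfold x1, x2; ring).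
  assert (E' : (snd p - snd t) = y1 + y2) by (unfold y1, y2; ring).
  rewrite E, E' in H1.
  set (a := dist2 p t) in *. set (b := dist2 p r) in *. set (c := dist2 r t) in *.
  assert (CS : x1 * x2 + y1 * y2 <= b * c).
  { assert (Hbc : (b*c)^2 = (x1^2+y1^2)*(x2^2+y2^2)) by (rewrite <- H2, <- H3; ring).
    assert (0 <= b * c) by nra.
    destruct (Rle_or_lt (x1 * x2 + y1 * y2) (b*c)) as [|Hlt]; auto.
    exfalso. assert ((b*c)^2 < (x1 * x2 + y1 * y2)^2) by nra.
    assert (0 <= (x1*y2 - x2*y1)^2) by apply pow2_ge_0.
    assert ((x1^2+y1^2)*(x2^2+y2^2) = (x1 * x2 + y1 * y2)^2 + (x1*y2 - x2*y1)^2) by ring.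
    lra. }
  assert (a^2 <= (b+c)^2) by nra.
  destruct (Rle_or_lt a (b+c)) as [|Hlt]; auto. exfalso. nra.
Qed.

Lemma interference_eq T r P eta :
  interference T r P eta = P * sumR (map (fun p => eta (dist2 p r)) T).
Proof. induction T as [|a T IH]; simpl. ring. unfold interference in *. simpl. rewrite IH. unfold sumR; simpl. ring. Qed.

Lemma sumR_le {A} (f g : A -> R) (l : list A) : (forall x, In x l -> f x <= g x) ->
  sumR (map f l) <= sumR (map g l).
Proof. induction l as [|a l IH]; intros H; unfold sumR; simpl. lra.
  fold (sumR (map f l)) (sumR (map g l)). assert (f a <= g a) by (apply H; simpl; auto).
  assert (sumR (map f l) <= sumR (map g l)) by (apply IH; intros; apply H; simpl; auto). lra. Qed.

Lemma Rpower_inv x y : 0 < x -> Rpower (/ x) y = / Rpower x y.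
Proof. intros. unfold Rpower. rewrite ln_Rinv by auto. rewrite <- exp_Ropp. f_equal. ring. Qed.

Lemma Rpower_pos x y : 0 < Rpower x y.
Proof. unfold Rpower. apply exp_pos. Qed.

Fixpoint psum (f : nat -> R) (K : nat) : R :=
  match K with 0 => 0 | S K' => psum f K' + f K' end.

Lemma psum_sum_n f N : psum f (S N) = sum_n f N.
Proof. induction N as [|N IH]. simpl. rewrite sum_O. ring.
  rewrite sum_Sn. change plus with Rplus. rewrite <- IH. simpl. ring. Qed.

Lemma psum_le_Series f : (forall n, 0 <= f n) -> ex_series f -> forall K, psum f K <= Series f.
Proof.
  intros H0 He K. apply Rle_trans with (psum f (S K)).
  simpl. specialize (H0 K). lra. rewrite psum_sum_n. apply sum_le_Series; auto.
Qed.

Definition a6 (alpha : R) (n : nat) : R := 6 / Rpower (INR (S n)) (alpha - 1).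
Definition b3 (alpha : R) (n : nat) : R := 3 / Rpower (INR (S n)) alpha.

Lemma a6_eq alpha n : a6 alpha n = 6 * pterm (alpha - 1) n.
Proof. unfold a6, pterm. unfold Rdiv. ring. Qed.
Lemma b3_eq alpha n : b3 alpha n = 3 * pterm alpha n.
Proof. unfold b3, pterm. unfold Rdiv. ring. Qed.

Lemma sum_n_scale (c : R) f N : sum_n (fun n => c * f n) N = c * sum_n f N.
Proof. exact (sum_n_mult_l c f N). Qed.

Lemma ex_series_scale (c p : R) : 0 <= c -> 1 < p -> ex_series (fun n => c * pterm p n).
Proof. intros Hc Hp. apply ex_series_pos_bounded with (c * (1 + / (p - 1))).
  intros n. assert (H := pterm_pos p n). nra.
  intros N. rewrite sum_n_scale. apply Rmult_le_compat_l; auto. apply psum_bound'; auto. Qed.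

Lemma ex_a6 alpha : alpha > 2 -> ex_series (a6 alpha).
Proof. intros. apply (ex_series_ext (fun n => 6 * pterm (alpha - 1) n)).
  intros n. rewrite a6_eq. reflexivity. apply ex_series_scale; lra. Qed.
Lemma ex_b3 alpha : alpha > 2 -> ex_series (b3 alpha).
Proof. intros. apply (ex_series_ext (fun n => 3 * pterm alpha n)).
  intros n. rewrite b3_eq. reflexivity. apply ex_series_scale; lra. Qed.

Definition gk (alpha s : R) (k : nat) : R := / Rpower (INR (Nat.max 1 k) * (s / 2)) alpha.

Lemma Hs_eq alpha s : 0 < s -> forall K,
  Hs (gk alpha s) K = Rpower (2 / s) alpha * (psum (a6 alpha) K + psum (b3 alpha) K).
Proof.
  intros Hs0 K. induction K as [|K IH]. simpl. ring.
  change (Hs (gk alpha s) (S K)) with (Hs (gk alpha s) K + (6 * INR (S K) + 3) * gk alpha s (S K)).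
  rewrite IH. simpl psum. unfold gk, a6, b3.
  replace (Nat.max 1 (S K)) with (S K) by lia.
  set (x := INR (S K)).
  assert (Hx : 0 < x) by (unfold x; apply lt_0_INR; lia).
  rewrite <- Rpower_mult_distr by lra.
  assert (E1 : Rpower x alpha = Rpower x (alpha - 1) * x).
  { rewrite <- (Rpower_1 x) at 3 by lra. rewrite <- Rpower_plus. f_equal. ring. }
  assert (E2 : Rpower (2 / s) alpha * Rpower (s / 2) alpha = 1).
  { rewrite Rpower_mult_distr by (apply Rdiv_lt_0_compat; lra).
    replace (2 / s * (s / 2)) with 1 by (field; lra). apply Rpower_1_base. }
  assert (P1 := Rpower_pos x (alpha - 1)). assert (P2 := Rpower_pos (s/2) alpha).
  rewrite E1. field_simplify_eq; [| repeat split; lra].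
  replace (6 * Rpower (2 / s) alpha * x * Rpower (s / 2) alpha) with (6 * x * (Rpower (2 / s) alpha * Rpower (s / 2) alpha)) by ring.
  replace (3 * Rpower (2 / s) alpha * Rpower (s / 2) alpha) with (3 * (Rpower (2 / s) alpha * Rpower (s / 2) alpha)) by ring.
  rewrite E2. ring.
Qed.

Lemma gk_pos alpha s k : 0 <= gk alpha s k.
Proof. unfold gk. left. apply Rinv_0_lt_compat, Rpower_pos. Qed.

Lemma gk_decr alpha s k : 0 < s -> 0 <= alpha -> gk alpha s (S k) <= gk alpha s k.
Proof.
  intros Hs Ha. unfold gk. apply Rinv_le_contravar. apply Rpower_pos.
  apply Rle_Rpower_l; auto. split.
  apply Rmult_lt_0_compat; [apply lt_0_INR; lia | lra].
  apply Rmult_le_compat_r; [lra|]. apply le_INR. lia.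
Qed.

Lemma in_list_max k l : In k l -> (k <= list_max l)%nat.
Proof. intros H. assert (H2 := proj1 (list_max_le l (list_max l)) (Nat.le_refl _)).
  rewrite Forall_forall in H2. auto. Qed.

Lemma part_a (alpha beta : R) (Halpha : alpha > 2) (Hbeta : beta > 0) (No C D : R) :
  No > 0 -> C > 0 -> D > 0 ->
  (1 + C) / (C * (2 + D)) < 1 / (tau alpha * Rpower beta (1 / alpha)) ->
  ensures_SINR C D beta No (eta_alpha alpha).
Proof.
  intros HNo HC HD Hcond.
  set (s := C * (2 + D)) in *.
  assert (Hs : 0 < s) by (unfold s; nra).
  assert (Hs2 : 2 * C < s) by (unfold s; nra).
  set (S := Series (a6 alpha) + Series (b3 alpha)).
  assert (HSa : 0 <= Series (a6 alpha) /\ 6 <= Series (a6 alpha)).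
  { assert (H := psum_le_Series (a6 alpha) ltac:(intros n; unfold a6; left; apply Rdiv_lt_0_compat; [lra|apply Rpower_pos]) (ex_a6 alpha Halpha) 1).
    change (psum (a6 alpha) 1) with (0 + a6 alpha 0) in H.
    assert (a6 alpha 0 = 6) by (unfold a6; simpl INR; rewrite Rpower_1_base; field). lra. }
  assert (HSb : 0 <= Series (b3 alpha)).
  { assert (H := psum_le_Series (b3 alpha) ltac:(intros n; unfold b3; left; apply Rdiv_lt_0_compat; [lra|apply Rpower_pos]) (ex_b3 alpha Halpha) 1).
    change (psum (b3 alpha) 1) with (0 + b3 alpha 0) in H.
    assert (b3 alpha 0 = 3) by (unfold b3; simpl INR; rewrite Rpower_1_base; field). lra. }
  assert (HS : 0 < S) by (unfold S; lra).
  assert (Htau : tau alpha = 2 * Rpower S (1 / alpha)) by reflexivity.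
  set (Q := Rpower (2 / s) alpha * S).
  set (E := / Rpower (1 + C) alpha).
  assert (Hkey : beta * Q < E).
  { set (tb := tau alpha * Rpower beta (1 / alpha)) in *.
    assert (Htb : 0 < tb) by (unfold tb; rewrite Htau; apply Rmult_lt_0_compat; [apply Rmult_lt_0_compat; [lra|apply Rpower_pos]|apply Rpower_pos]).
    assert (H1 : tb * (1 + C) < s).
    { apply Rmult_lt_compat_r with (r := s * tb) in Hcond; [|nra].
      replace ((1 + C) / s * (s * tb)) with (tb * (1+C)) in Hcond by (field; lra).
      replace (1 / tb * (s * tb)) with s in Hcond by (field; lra). auto. }
    assert (Hpos : 0 < tb * (1 + C)) by (apply Rmult_lt_0_compat; lra).
    assert (Hal : 0 < alpha) by lra.
    assert (H1' := Rlt_Rpower_l (tb * (1+C)) s alpha Hal (conj Hpos H1)). clear H1. rename H1' into H1.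
    rewrite <- Rpower_mult_distr in H1 by lra. unfold tb in H1.
    rewrite <- Rpower_mult_distr in H1 by (try rewrite Htau; try apply Rmult_lt_0_compat; try lra; apply Rpower_pos).
    rewrite Htau in H1. rewrite <- Rpower_mult_distr in H1 by (lra || apply Rpower_pos).
    rewrite !Rpower_mult in H1. replace (1 / alpha * alpha) with 1 in H1 by (field; lra).
    rewrite !Rpower_1 in H1 by lra.
    unfold Q, E. unfold Rdiv. rewrite <- Rpower_mult_distr by (try apply Rinv_0_lt_compat; lra).
    rewrite Rpower_inv by lra.
    assert (P1 := Rpower_pos 2 alpha). assert (P2 := Rpower_pos s alpha). assert (P3 := Rpower_pos (1+C) alpha).
    apply (Rmult_lt_reg_r (Rpower s alpha * Rpower (1 + C) alpha)). nra.
    replace (beta * (Rpower 2 alpha * / Rpower s alpha * S) * (Rpower s alpha * Rpower (1 + C) alpha))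
      with (Rpower 2 alpha * S * beta * Rpower (1 + C) alpha) by (field; lra).
    replace (/ Rpower (1 + C) alpha * (Rpower s alpha * Rpower (1 + C) alpha)) with (Rpower s alpha) by (field; lra).
    lra. }
  assert (HQ0 : 0 <= Q) by (unfold Q; assert (H := Rpower_pos (2/s) alpha); nra).
  assert (HE0 : 0 < E) by (unfold E; apply Rinv_0_lt_compat, Rpower_pos).
  exists (beta * No / (E - beta * Q) + 1). split.
  { assert (0 <= beta * No / (E - beta * Q)) by (apply Rlt_le, Rdiv_lt_0_compat; nra). lra. }
  intros t r T Hnd [Hd0 Hsep].
  inversion Hnd as [|? ? Hnin HndT]; subst.
  assert (HsepT : forall u v, In u T -> In v T -> u <> v -> dist2 u v >= s).
  { intros u v Hu Hv Huv. apply Hsep; simpl; auto. }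
  assert (Hfar : forall p, In p T -> s / 2 < dist2 p r).
  { intros p Hp. assert (Hpt : p <> t) by (intros E'; subst; auto).
    assert (H1 := Hsep p t (or_intror Hp) (or_introl eq_refl) Hpt).
    assert (H2 := dist2_tri p r t). rewrite (dist2_sym r t) in H2. fold s in H1. lra. }
  set (kf := fun p : pt => Z.to_nat (fl (2 * dist2 p r / s))).
  assert (Hk : forall p, In p T -> (1 <= kf p)%nat /\ INR (kf p) <= 2 * dist2 p r / s < INR (kf p) + 1).
  { intros p Hp. specialize (Hfar p Hp). destruct (fl_spec (2 * dist2 p r / s)) as [F1 F2].
    assert (Hx : 1 < 2 * dist2 p r / s) by (apply (Rmult_lt_reg_r s); [lra|]; unfold Rdiv; rewrite Rmult_assoc, Rinv_l; lra).
    assert (Hpos : (0 < fl (2 * dist2 p r / s))%Z) by (apply lt_IZR; lra).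
    unfold kf. rewrite INR_IZR_INZ, Z2Nat.id by lia. repeat split; try lra. lia. }
  set (h := s / sqrt 2).
  assert (Hsq : sqrt 2 * sqrt 2 = 2) by (apply sqrt_sqrt; lra).
  assert (Hsq0 : 0 < sqrt 2) by (apply sqrt_lt_R0; lra).
  assert (Hh : 0 < h) by (unfold h; apply Rdiv_lt_0_compat; lra).
  assert (Hhs : 2 * h * h = s * s).
  { unfold h. unfold Rdiv. replace (2 * (s * / sqrt 2) * (s * / sqrt 2)) with (2 * (s*s) * / (sqrt 2 * sqrt 2)) by (field; lra).
    rewrite Hsq. field. }
  assert (Hcount := count_geo r s h T kf Hs Hh Hhs HndT HsepT
    (fun p Hp => proj1 (Hk p Hp))
    (fun p m Hp Hlt => ltac:(
       destruct (Hk p Hp) as [_ [K1 K2]];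
       assert (Hm : INR (kf p) + 1 <= INR m) by (rewrite <- S_INR; apply le_INR; lia);
       assert (2 * dist2 p r / s < INR m) by lra;
       apply (Rmult_lt_reg_r (2 / s)); [apply Rdiv_lt_0_compat; lra|];
       replace (INR m * s / 2 * (2 / s)) with (INR m) by (field; lra);
       replace (dist2 p r * (2 / s)) with (2 * dist2 p r / s) by (field; lra); lra))).
  set (K := list_max (map kf T)).
  assert (Habel := abel (gk alpha s) (gk_pos alpha s) (fun k => gk_decr alpha s k Hs ltac:(lra)) K (map kf T)
     (fun k Hk => in_list_max k _ Hk) Hcount).
  rewrite Hs_eq in Habel by auto.
  assert (HpsQ : Rpower (2 / s) alpha * (psum (a6 alpha) K + psum (b3 alpha) K) <= Q).
  { unfold Q, S. apply Rmult_le_compat_l. left; apply Rpower_pos.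
    assert (H1 := psum_le_Series (a6 alpha) ltac:(intros n; unfold a6; left; apply Rdiv_lt_0_compat; [lra|apply Rpower_pos]) (ex_a6 alpha Halpha) K).
    assert (H2 := psum_le_Series (b3 alpha) ltac:(intros n; unfold b3; left; apply Rdiv_lt_0_compat; [lra|apply Rpower_pos]) (ex_b3 alpha Halpha) K).
    lra. }
  assert (HI : sumR (map (fun p => eta_alpha alpha (dist2 p r)) T) <= Q).
  { eapply Rle_trans; [|exact HpsQ]. eapply Rle_trans; [|exact Habel].
    rewrite map_map. apply sumR_le. intros p Hp.
    destruct (Hk p Hp) as [K0 [K1 K2]]. specialize (Hfar p Hp).
    unfold eta_alpha, gk. replace (Nat.max 1 (kf p)) with (kf p) by lia.
    apply Rinv_le_contravar. apply Rpower_pos. apply Rle_Rpower_l. lra. split.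
    apply Rmult_lt_0_compat; [apply lt_0_INR; lia|lra].
    assert (INR (kf p) * (s / 2) <= dist2 p r).
    { apply (Rmult_le_reg_r (2 / s)). apply Rdiv_lt_0_compat; lra.
      replace (INR (kf p) * (s / 2) * (2 / s)) with (INR (kf p)) by (field; lra).
      replace (dist2 p r * (2 / s)) with (2 * dist2 p r / s) by (field; lra). lra. }
    lra. }
  assert (HI0 : 0 <= sumR (map (fun p => eta_alpha alpha (dist2 p r)) T)).
  { replace 0 with (sumR (map (fun _ : pt => 0) T)).
    apply sumR_le. intros; unfold eta_alpha; left; apply Rinv_0_lt_compat, Rpower_pos.
    clear. induction T; unfold sumR in *; simpl; auto. rewrite IHT. ring. }
  assert (Heta0 : E <= eta_alpha alpha (dist2 t r)).
  { unfold E, eta_alpha. apply Rinv_le_contravar. apply Rpower_pos. apply Rle_Rpower_l. lra.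
    assert (H := dist2_nonneg t r). lra. }
  unfold SINR. rewrite interference_eq.
  set (I := sumR (map (fun p => eta_alpha alpha (dist2 p r)) T)) in *.
  set (P := beta * No / (E - beta * Q) + 1).
  assert (HP : beta * No <= P * (E - beta * Q)).
  { unfold P. rewrite Rmult_plus_distr_r. unfold Rdiv. rewrite Rmult_assoc, Rinv_l by lra. lra. }
  assert (HP0 : 0 < P).
  { unfold P. assert (0 <= beta * No / (E - beta * Q)) by (apply Rlt_le, Rdiv_lt_0_compat; nra). lra. }
  apply Rle_ge. apply (Rmult_le_reg_r (No + P * I)). nra.
  unfold Rdiv. rewrite Rmult_assoc, Rinv_l by nra.
  assert (P * I <= P * Q) by (apply Rmult_le_compat_l; lra).
  assert (P * E <= P * eta_alpha alpha (dist2 t r)) by (apply Rmult_le_compat_l; lra).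
  nra.
Qed.

Lemma cond_of (Q0 C D : R) : 0 < Q0 -> 0 < C -> 0 < D -> Q0 * (1 + C) < C * (2 + D) ->
  (1 + C) / (C * (2 + D)) < 1 / Q0.
Proof.
  intros HQ HC HD H. assert (Hp : 0 < C * (2 + D)) by nra.
  apply (Rmult_lt_reg_r (C * (2 + D) * Q0)). nra.
  replace ((1 + C) / (C * (2 + D)) * (C * (2 + D) * Q0)) with (Q0 * (1 + C)) by (field; lra).
  replace (1 / Q0 * (C * (2 + D) * Q0)) with (C * (2 + D)) by (field; lra). auto.
Qed.

Theorem lemma2 (alpha beta : R) (Halpha : alpha > 2) (Hbeta : beta > 0) :
  (* (a) *)
  (forall No C D : R, No > 0 -> C > 0 -> D > 0 ->
     (1 + C) / (C * (2 + D)) < 1 / (tau alpha * Rpower beta (1 / alpha)) ->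
     ensures_SINR C D beta No (eta_alpha alpha)) /\
  (* (b) *)
  (forall C : R, C > 0 ->
     exists D : R, D > 0 /\
       forall No : R, No > 0 -> ensures_SINR C D beta No (eta_alpha alpha)) /\
  (* (c) *)
  (exists D : R, D > 0 /\ exists C0 : R,
     forall C : R, C >= C0 -> C > 0 ->
       forall No : R, No > 0 -> ensures_SINR C D beta No (eta_alpha alpha)).
Proof.
  set (Q0 := tau alpha * Rpower beta (1 / alpha)).
  assert (HQ0 : 0 < Q0).
  { unfold Q0, tau. apply Rmult_lt_0_compat; [apply Rmult_lt_0_compat; [lra|apply Rpower_pos]|apply Rpower_pos]. }
  split; [|split].
  - intros No C D HNo HC HD H. apply part_a; auto.
  - intros C HC. assert (HD : 0 < Q0 * (1 + C) / C) by (apply Rdiv_lt_0_compat; nra).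
    exists (Q0 * (1 + C) / C). split. lra.
    intros No HNo. apply part_a; try lra.
    apply (cond_of Q0 C _ HQ0); try lra.
    replace (C * (2 + Q0 * (1 + C) / C)) with (2 * C + Q0 * (1 + C)) by (field; lra). lra.
  - exists (2 * Q0). split. lra. exists 1. intros C HC1 HC No HNo.
    apply part_a; try lra. apply (cond_of Q0 C _ HQ0); try lra. nra.
Qed.
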